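(* Let $G$ be a fullerene graph and $S$ a perfect star packing of $G$. Then each hexagonal face of $G$ contains at most two vertices of $C(S)$. Moreover, if a hexagonal face $h$ contains two vertices of $C(S)$, then these two vertices are antipodal on $h$ (i.e. at distance $3$ along the $6$-cycle $h$).
   Context: A fullerene graph is a finite simple connected (equivalently, $3$-connected) plane cubic graph all of whose faces are pentagons or hexagons. A perfect star packing of $G$ is a spanning subgraph $S$ of $G$ every connected component of which is isomorphic to $K_{1,3}$; $C(S)$ denotes the set of centers (degree-$3$ vertices) of the stars in $S$. *)

(* Defs.v *)
From mathcomp Require Import all_boot all_fingroup.
Set Implicit Arguments. Unset Strict Implicit. Unset Printing Implicit Defensive.

(* A plane graph is encoded as a combinatorial map (rotation system) on a
   finite set of darts D:
   - alpha : the edge involution (a dart and its reverse),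
   - sigma : the rotation of darts around their tail vertex,
   - node  : maps each dart to its tail vertex; vertices = sigma-orbits,
   - faces = orbits of  face_perm d := sigma (alpha d); the face boundary
     walk starting at dart d visits the vertices node (iter k face_perm d). *)

Section Map.
Variables (V D : finType) (node : D -> V) (alpha sigma : {perm D}).

Definition face_perm (d : D) : D := sigma (alpha d).

Definition adjG : rel V :=
  fun u v => [exists d, (node d == u) && (node (alpha d) == v)].

Definition fullerene : Prop :=
      (forall d, alpha (alpha d) = d) /\ (forall d, alpha d != d) /\
      (forall v, exists d, node d = v) /\
      (forall d d', node d = node d' <-> fconnect sigma d d') /\
      (* simple: no loops, no multiple edges *)
      (forall d, node (alpha d) != node d) /\
      (forall d d', node d = node d' -> node (alpha d) = node (alpha d') -> d = d') /\
      (forall d, fingraph.order sigma d = 3) /\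
      (forall u v, connect adjG u v) /\
      (* plane: Euler characteristic 2, i.e. V - E + F = 2 with E = |D|/2 *)
      #|V| + fcard face_perm (predT : {pred D}) = (#|D|./2 + 2)%N /\
      (forall d, fingraph.order face_perm d = 5 \/ fingraph.order face_perm d = 6).

End Map.

(* A perfect star packing of a graph with adjacency adj is a spanning subgraph,
   given by its (symmetric) edge relation F, every connected component of
   which is isomorphic to K_{1,3}. *)
Definition perfect_star_packing (V : finType) (adj F : rel V) : Prop :=
  [/\ (forall u v, F u v -> adj u v),
      (forall u v, F u v = F v u) &
      (forall x, exists c a b e,
          [/\ uniq [:: c; a; b; e],
              [set y | connect F x y] = [set c; a; b; e] &
              (forall u w, u \in [set c; a; b; e] -> w \in [set c; a; b; e] ->
                 F u w = ((u == c) && (w \in [set a; b; e]))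
                         || ((w == c) && (u \in [set a; b; e])))])].

Definition centers (V : finType) (F : rel V) : {set V} :=
  [set v | #|[set w | F v w]| == 3].

(* Main.v *)
Require Import Defs.
From mathcomp Require Import all_boot all_fingroup.
From mathcomp Require Import zify.

Section Aux.
Variables (V D : finType) (node : D -> V) (alpha sigma : {perm D}).
Hypothesis HG : fullerene node alpha sigma.
Variable F : rel V.
Hypothesis HS : perfect_star_packing (adjG node alpha) F.

Lemma node_sigma x : node (sigma x) = node x.
Proof.
case: HG => _ [_ [_ [Hnode _]]].
by symmetry; apply/(Hnode _ _).2; apply: fconnect1.
Qed.

Lemma adj_sym u v : adjG node alpha u v -> adjG node alpha v u.
Proof.
case: HG => Hinv _.
case/existsP=> e /andP[/eqP He1 /eqP He2]; apply/existsP; exists (alpha e).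
by rewrite Hinv He1 He2 !eqxx.
Qed.

Lemma nbr_F c w : c \in centers F -> adjG node alpha c w -> F c w.
Proof.
case: HG => _ [_ [Hsurj [Hnode [_ [_ [Hcubic _]]]]]].
case: HS => HFadj _ _.
rewrite inE => /eqP HN Hcw.
have [d0 Hd0] := Hsurj c.
set A := [set node (alpha e) | e in [set e | fconnect sigma d0 e]].
have HA : #|A| <= 3.
  apply: leq_trans (leq_imset_card _ _) _.
  rewrite -(Hcubic d0) /fingraph.order; apply: subset_leq_card.
  by apply/subsetP => x; rewrite inE.
have sub : forall w, adjG node alpha c w -> w \in A.
  move=> w' /existsP[e /andP[/eqP He1 /eqP He2]].
  apply/imsetP; exists e => //; rewrite inE.
  by apply/(Hnode _ _).1; rewrite He1 Hd0.
have sNA : [set w | F c w] \subset A.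
  by apply/subsetP => x; rewrite inE => /HFadj /sub.
have Heq : #|[set w | F c w]| = #|A|.
  by apply/eqP; rewrite eqn_leq subset_leq_card // HN.
have := (subset_cardP Heq sNA) w.
by rewrite inE => ->; apply: sub.
Qed.

Lemma center_unique c1 c2 : c1 \in centers F -> c2 \in centers F ->
  connect F c1 c2 -> c1 = c2.
Proof.
case: HS => _ HFsym Hstar.
have [c [a [b [e [Hu Hcomp HFr]]]]] := Hstar c1.
have key : forall v, v \in centers F -> connect F c1 v -> v = c.
  move=> v Hv Hcv.
  have vin : v \in [set c; a; b; e] by rewrite -Hcomp inE.
  apply/eqP; apply/negPn/negP => Hvc.
  have sub1 : [set w | F v w] \subset [set c].
    apply/subsetP => w; rewrite inE => Hvw.
    have win : w \in [set c; a; b; e].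
      rewrite -Hcomp inE; apply: connect_trans Hcv (connect1 Hvw).
    move: (HFr v w vin win); rewrite Hvw (negbTE Hvc) /=.
    by move=> /esym /andP[/eqP -> _]; rewrite inE.
  move: Hv; rewrite inE => /eqP H3.
  by move: (subset_leq_card sub1); rewrite H3 cards1.
move=> H1 H2 H12.
by rewrite (key c1 H1 (connect0 _ _)) (key c2 H2 H12).
Qed.

End Aux.

Theorem mainTheorem4 (V D : finType) (node : D -> V) (alpha sigma : {perm D})
  (HG : fullerene node alpha sigma)
  (F : rel V) (HS : perfect_star_packing (adjG node alpha) F)
  (d : D) (Hhex : fingraph.order (face_perm alpha sigma) d = 6) :
  #|[set node (iter k (face_perm alpha sigma) d) | k : 'I_6] :&: centers F| <= 2
  /\ (forall i j : 'I_6,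
        node (iter i (face_perm alpha sigma) d) \in centers F ->
        node (iter j (face_perm alpha sigma) d) \in centers F ->
        node (iter i (face_perm alpha sigma) d) != node (iter j (face_perm alpha sigma) d) ->
        j = (i + 3) %% 6 :> nat).
Proof.
set f := face_perm alpha sigma.
set u := fun k => node (iter k f d).
have injf : injective f.
  by apply: inj_comp; apply: perm_inj.
have per : forall k, u (k + 6) = u k.
  by move=> k; rewrite /u iterD -Hhex iter_order.
have adjS : forall k, adjG node alpha (u k) (u k.+1).
  move=> k; apply/existsP; exists (iter k f d).
  by rewrite /u iterS /f /face_perm (node_sigma _ _ _ _ _ HG) !eqxx.
have [_ HFsym _] := HS.
have close1 : forall k, u k \in centers F -> u k.+1 \in centers F -> u k = u k.+1.
  move=> k H1 H2; apply: (center_unique _ _ _ _ _ HS _ _ H1 H2).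
  by apply: connect1; apply: (nbr_F _ _ _ _ _ HG _ HS) => //.
have close2 : forall k, u k \in centers F -> u k.+2 \in centers F -> u k = u k.+2.
  move=> k H1 H2; apply: (center_unique _ _ _ _ _ HS _ _ H1 H2).
  apply: connect_trans (connect1 (nbr_F _ _ _ _ _ HG _ HS _ _ H1 (adjS k))) _.
  apply: connect1; rewrite HFsym; apply: (nbr_F _ _ _ _ _ HG _ HS) => //.
  by apply: (adj_sym _ _ _ _ _ HG).
have close : forall k m, m \in [:: 1; 2; 4; 5] -> u k \in centers F ->
    u (k + m) \in centers F -> u k = u (k + m).
  move=> k m Hm H1 H2; move: Hm; rewrite !inE => /or4P[] /eqP Hm; subst m.
  - by rewrite addn1 in H2 *; apply: close1.
  - by rewrite addn2 in H2 *; apply: close2.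
  - have E : k + 6 = (k + 4).+2 by rewrite -!addnS.
    rewrite -[u k]per E; symmetry; apply: close2 => //.
    by rewrite -E per.
  - have E : k + 6 = (k + 5).+1 by rewrite -!addnS.
    rewrite -[u k]per E; symmetry; apply: close1 => //.
    by rewrite -E per.
have part2 : forall i j : 'I_6, u i \in centers F -> u j \in centers F ->
    u i != u j -> j = (i + 3) %% 6 :> nat.
  move=> [i Hi] [j Hj] /= Hci Hcj Hne.
  have [lt|ge] := ltnP i j.
  - have Hm := subnKC (ltnW lt).
    have : (j - i \in [:: 1; 2; 4; 5]) || (j - i == 3).
      by move: Hi Hj lt; clear; do 6?[case: i => [|i]] => //;
         do 6?[case: j => [|j]].
    case/orP => [Hin|/eqP H3].
    + by move: Hne; rewrite -Hm in Hcj *; rewrite (close _ _ Hin Hci Hcj) eqxx.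
    + by rewrite modn_small; lia.
  - have Hm := subnKC ge.
    have : (i - j \in [:: 1; 2; 4; 5]) || (i - j == 3) || (i == j).
      by move: Hi Hj ge; clear; do 6?[case: i => [|i]] => //;
         do 6?[case: j => [|j]].
    case/orP => [/orP[Hin|/eqP H3]|/eqP Heq].
    + by move: Hne; rewrite -Hm in Hci *; rewrite (close _ _ Hin Hcj Hci) eqxx.
    + have -> : i + 3 = j + 6 by lia.
      by rewrite modnDr modn_small.
    + by move: Hne; rewrite Heq eqxx.
split; last exact: part2.
set S := _ :&: _.
have [->|[x xS]] := set_0Vmem S; first by rewrite cards0.
move: (xS); rewrite inE => /andP[/imsetP[i _ Hx] Hxc].
rewrite Hx in Hxc.
have sub : S \subset [set u i; u (@inord 5 ((i + 3) %% 6))].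
  apply/subsetP => y; rewrite inE => /andP[/imsetP[j _ ->] Hyc].
  rewrite !inE; case: (eqVneq (node (iter j f d)) (u i)) => [//|Hne].
  have Hne' : u i != u j by rewrite eq_sym.
  have Hj := part2 i j Hxc Hyc Hne'.
  apply/orP; right; apply/eqP; rewrite /u -Hj.
  by congr (node (iter _ _ _)); rewrite inordK.
apply: leq_trans (subset_leq_card sub) _.
by rewrite cards2; case: (_ != _).
Qed.
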